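(* Let $L>0$, $N\in\mathbb{N}_+$, $h=L/N$, and let $\epsilon>0$, $\theta_0>0$, $\tau>0$, $\alpha\in(0,1)$. Let $u^n\in\mathcal{C}_{per}$ satisfy $-1<u^n<1$ pointwise. Then the Lagrange function $$\mathcal{L}(u_1,w_1,u_2,w_2,u_3,w_3)=Z_1(u_1,w_1)+Z_2(u_2,w_2)+\langle u_3,u_1-u_2\rangle-\langle w_3,w_1-w_2\rangle$$ has a stationary point, i.e. there exist $u_1^*,w_1^*,u_2^*,w_2^*,u_3^*,w_3^*\in\mathcal{C}_{per}$ with $-1<u_2^*<1$ pointwise such that $$-\epsilon^2\Delta_h u_1^*-\alpha w_1^*+u_3^*=0,\qquad \alpha(-u_1^*+u^n)+\tau\Delta_h w_1^*-w_3^*=0,$$ $$\log(1+u_2^* )-\log(1-u_2^* )-\theta_0u^n-(1-\alpha)w_2^*-u_3^*=0,\qquad (1-\alpha)(-u_2^*+u^n)+w_3^*=0,$$ $$u_1^*-u_2^*=0,\qquad w_1^*-w_2^*=0.$$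
   Context: $\mathcal{C}_{per}$ is the space of real grid functions $\nu=(\nu_{i,j,k})_{i,j,k\in\mathbb{Z}}$ that are $N$-periodic in each index ($\nu_{i,j,k}$ is the value at the cell centre $((i-\frac12)h,(j-\frac12)h,(k-\frac12)h)$ of $(0,L)^3$). Inner product: $\langle\nu,\xi\rangle=h^2\sum_{i,j,k=1}^N\nu_{i,j,k}\xi_{i,j,k}$, $\|\nu\|_2=\langle\nu,\nu\rangle^{1/2}$. Discrete Laplacian: $(\Delta_h\nu)_{i,j,k}=h^{-2}(\nu_{i+1,j,k}+\nu_{i-1,j,k}+\nu_{i,j+1,k}+\nu_{i,j-1,k}+\nu_{i,j,k+1}+\nu_{i,j,k-1}-6\nu_{i,j,k})$. Discrete gradient norm: $\|\nabla_h\nu\|_2^2=h^2\sum_{i,j,k=1}^N h^{-2}\big[(\nu_{i+1,j,k}-\nu_{i,j,k})^2+(\nu_{i,j+1,k}-\nu_{i,j,k})^2+(\nu_{i,j,k+1}-\nu_{i,j,k})^2\big]$. Logarithms, products and inequalities of grid functions are pointwise; $1$ denotes the constant grid function. $Z_1(u,w)=\frac{\epsilon^2}{2}\|\nabla_h u\|_2^2-\alpha\langle u-u^n,w\rangle-\frac{\tau}{2}\|\nabla_h w\|_2^2$ and, for $-1<u<1$ pointwise, $Z_2(u,w)=\langle 1+u,\log(1+u)\rangle+\langle 1-u,\log(1-u)\rangle-\theta_0\langle u^n,u\rangle-(1-\alpha)\langle u-u^n,w\rangle$. The displayed system is the vanishing of all partial gradients of $\mathcal{L}$ (the definition of a stationary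 point). *)

(* Defs.v *)
From Stdlib Require Import Reals ZArith.
Open Scope R_scope.

(* A grid function on cell centres, indexed by Z^3.  Membership in C_per
   (N-periodicity in each index) is expressed by [periodic N]. *)
Definition grid := Z -> Z -> Z -> R.

Definition periodic (N : nat) (v : grid) : Prop :=
  forall i j k : Z,
    v (i + Z.of_nat N)%Z j k = v i j k /\
    v i (j + Z.of_nat N)%Z k = v i j k /\
    v i j (k + Z.of_nat N)%Z = v i j k.

Definition lap_h (h : R) (v : grid) (i j k : Z) : R :=
  / (h ^ 2) *
  (v (i + 1)%Z j k + v (i - 1)%Z j k + v i (j + 1)%Z k + v i (j - 1)%Z k
   + v i j (k + 1)%Z + v i j (k - 1)%Z - 6 * v i j k).

(* Main.v *)
Require Import Defs.
From Stdlib Require Import Reals ZArith Lra Lia Psatz Classical FunctionalExtensionality ClassicalEpsilon.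
From Coquelicot Require Import Coquelicot.
Open Scope R_scope.


Lemma ln_le_xm1 : forall x, 0 < x -> ln x <= x - 1.
Proof.
  intros x Hx. rewrite <- (ln_exp (x - 1)). apply ln_le; auto.
  pose proof (exp_ineq1_le (x-1)). lra.
Qed.

Lemma ln_nonpos : forall x, x <= 0 -> ln x = 0.
Proof. intros x Hx. unfold ln. destruct (Rlt_dec 0 x); [exfalso; lra|reflexivity]. Qed.

Definition phi (x : R) : R := x * ln x.
Definition Phi (s : R) : R := phi (1 + s) + phi (1 - s).
Definition Fl (s : R) : R := ln (1 + s) - ln (1 - s).

Lemma phi0 : phi 0 = 0.
Proof. unfold phi; ring. Qed.

Lemma phi_tangent : forall a m, 0 <= a -> 0 < m ->
  phi m + (a - m) * (ln m + 1) <= phi a.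
Proof.
  intros a m Ha Hm. unfold phi.
  destruct (Req_dec a 0) as [->|Ha0].
  - ring_simplify. lra.
  - assert (Ha' : 0 < a) by lra.
    assert (H1 : ln (m / a) <= m / a - 1) by (apply ln_le_xm1; apply Rdiv_lt_0_compat; lra).
    unfold Rdiv in H1. rewrite ln_mult in H1 by (try apply Rinv_0_lt_compat; lra).
    rewrite ln_Rinv in H1 by lra.
    assert (a * (ln m - ln a) <= a * (m * / a - 1)) by (apply Rmult_le_compat_l; lra).
    assert (a * (m * / a - 1) = m - a) by (field; lra).
    nra.
Qed.

Lemma phi_convex : forall a b t, 0 <= a -> 0 <= b -> 0 <= t <= 1 ->
  phi ((1 - t) * a + t * b) <= (1 - t) * phi a + t * phi b.
Proof.
  intros a b t Ha Hb Ht.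
  set (z := (1 - t) * a + t * b).
  assert (Hz : 0 <= z) by (unfold z; nra).
  destruct (Req_dec z 0) as [Hz0|Hz0].
  - rewrite Hz0, phi0. unfold phi.
    assert ((1-t)*a = 0) by (unfold z in Hz0; nra).
    assert (t*b = 0) by (unfold z in Hz0; nra).
    replace ((1 - t) * (a * ln a) + t * (b * ln b)) with (((1-t)*a) * ln a + (t*b) * ln b) by ring.
    rewrite H, H0. lra.
  - pose proof (phi_tangent a z Ha ltac:(lra)).
    pose proof (phi_tangent b z Hb ltac:(lra)).
    assert (E: (1 - t) * (phi z + (a - z) * (ln z + 1)) + t * (phi z + (b - z) * (ln z + 1)) = phi z)
      by (unfold z; ring).
    assert ((1-t) * (phi z + (a - z) * (ln z + 1)) <= (1-t) * phi a) by (apply Rmult_le_compat_l; lra).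
    assert (t * (phi z + (b - z) * (ln z + 1)) <= t * phi b) by (apply Rmult_le_compat_l; lra).
    lra.
Qed.

Lemma Phi_convex : forall p q t, -1 <= p <= 1 -> -1 <= q <= 1 -> 0 <= t <= 1 ->
  Phi ((1 - t) * p + t * q) <= (1 - t) * Phi p + t * Phi q.
Proof.
  intros p q t Hp Hq Ht. unfold Phi.
  replace (1 + ((1 - t) * p + t * q)) with ((1-t)*(1+p) + t*(1+q)) by ring.
  replace (1 - ((1 - t) * p + t * q)) with ((1-t)*(1-p) + t*(1-q)) by ring.
  pose proof (phi_convex (1+p) (1+q) t ltac:(lra) ltac:(lra) Ht).
  pose proof (phi_convex (1-p) (1-q) t ltac:(lra) ltac:(lra) Ht).
  lra.
Qed.

Lemma phi_ge : forall a, 0 <= a -> a - 1 <= phi a.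
Proof.
  intros a Ha. pose proof (phi_tangent a 1 Ha ltac:(lra)). unfold phi in *.
  rewrite ln_1 in H. lra.
Qed.

Lemma Phi_nonneg : forall s, -1 <= s <= 1 -> 0 <= Phi s.
Proof.
  intros s Hs. unfold Phi. pose proof (phi_ge (1+s) ltac:(lra)).
  pose proof (phi_ge (1-s) ltac:(lra)). lra.
Qed.

Lemma phi_small : forall x, 0 < x <= 1 -> Rabs (phi x) <= 2 * sqrt x.
Proof.
  intros x Hx. unfold phi.
  assert (Hs : 0 < sqrt x) by (apply sqrt_lt_R0; lra).
  assert (Hl : ln x <= 0).
  { destruct (Req_dec x 1) as [->|]. rewrite ln_1; lra.
    rewrite <- ln_1. left. apply ln_increasing; lra. }
  assert (H1 : ln (/ sqrt x) <= / sqrt x - 1) by (apply ln_le_xm1; apply Rinv_0_lt_compat; lra).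
  rewrite ln_Rinv in H1 by lra.
  assert (Hxs : x = sqrt x * sqrt x) by (rewrite sqrt_sqrt; lra).
  assert (ln x = 2 * ln (sqrt x)).
  { rewrite Hxs at 1. rewrite ln_mult by lra. ring. }
  rewrite Rabs_left1 by nra.
  assert (- ln (sqrt x) <= / sqrt x) by lra.
  assert (x * (- ln (sqrt x)) <= x * / sqrt x) by (apply Rmult_le_compat_l; lra).
  assert (x * / sqrt x = sqrt x) by (rewrite Hxs at 1; field; lra).
  nra.
Qed.

Lemma phi_cont : forall x, continuity_pt phi x.
Proof.
  intros x.
  destruct (Rlt_dec 0 x) as [Hp|Hn].
  - unfold phi. apply continuity_pt_mult. apply continuity_pt_id.
    apply derivable_continuous_pt. exists (/x). apply derivable_pt_lim_ln; auto.
  - destruct (Rlt_dec x 0) as [Hneg|Hz].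
    + intros e He. exists (- x). split; [lra|].
      intros y [_ Hy]. change (Rabs (y - x) < -x) in Hy. unfold phi.
      rewrite (ln_nonpos x) by lra.
      assert (y < 0) by (apply Rabs_def2 in Hy; lra).
      rewrite (ln_nonpos y) by lra. change (Rabs (y*0 - x*0) < e). replace (y*0 - x*0) with 0 by ring. rewrite Rabs_R0; lra.
    + assert (x = 0) by lra. subst x.
      intros e He. exists (Rmin 1 ((e/2)*(e/2))). split.
      { apply Rmin_pos; nra. }
      intros y [_ Hy]. change (Rabs (y - 0) < Rmin 1 ((e/2)*(e/2))) in Hy. change (Rabs (phi y - phi 0) < e). rewrite phi0. rewrite Rminus_0_r in *.
      destruct (Rle_dec y 0).
      * unfold phi. rewrite ln_nonpos by lra. rewrite Rmult_0_r, Rabs_R0. lra.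
      * rewrite Rabs_right in Hy by lra.
        assert (y <= 1) by (pose proof (Rmin_l 1 ((e/2)*(e/2))); lra).
        pose proof (phi_small y ltac:(lra)).
        assert (y < (e/2)*(e/2)) by (pose proof (Rmin_r 1 ((e/2)*(e/2))); lra).
        assert (sqrt y < e/2).
        { rewrite <- (sqrt_square (e/2)) by lra. apply sqrt_lt_1; nra. }
        lra.
Qed.

Lemma Phi_cont : forall x, continuity_pt Phi x.
Proof.
  intros x. unfold Phi.
  apply continuity_pt_plus.
  - apply (continuity_pt_comp (fun s => 1 + s) phi). 
    apply continuity_pt_plus. apply continuity_pt_const. intros a b; auto. apply continuity_pt_id.
    apply phi_cont.
  - apply (continuity_pt_comp (fun s => 1 - s) phi).
    apply continuity_pt_minus. apply continuity_pt_const. intros a b; auto. apply continuity_pt_id.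
    apply phi_cont.
Qed.

Lemma Phi_deriv : forall a b, -1 < a < 1 ->
  derivable_pt_lim (fun t => Phi (a + t * b)) 0 (Fl a * b).
Proof.
  intros a b Ha. apply is_derive_Reals. unfold Phi, phi, Fl.
  auto_derive.
  - repeat split; lra.
  - replace (a + 0 * b) with a by ring. replace (1 + - a) with (1 - a) by ring. field; lra.
Qed.

Fixpoint s1 (n : nat) (f : Z -> R) : R :=
  match n with O => 0 | S m => s1 m f + f (Z.of_nat m) end.

Lemma s1_ext : forall n f g, (forall i, (0 <= i < Z.of_nat n)%Z -> f i = g i) -> s1 n f = s1 n g.
Proof.
  induction n; intros f g H; cbn [s1]; auto.
  rewrite (IHn f g) by (intros; apply H; lia). rewrite H by lia. auto.
Qed.

Lemma s1_plus : forall n f g, s1 n (fun i => f i + g i) = s1 n f + s1 n g.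
Proof. induction n; intros; cbn [s1]; [ring| rewrite IHn; ring]. Qed.

Lemma s1_scal : forall n c f, s1 n (fun i => c * f i) = c * s1 n f.
Proof. induction n; intros; cbn [s1]; [ring| rewrite IHn; ring]. Qed.

Lemma s1_minus : forall n f g, s1 n (fun i => f i - g i) = s1 n f - s1 n g.
Proof. induction n; intros; cbn [s1]; [ring| rewrite IHn; ring]. Qed.

Lemma s1_le : forall n f g, (forall i, (0 <= i < Z.of_nat n)%Z -> f i <= g i) -> s1 n f <= s1 n g.
Proof.
  induction n; intros f g H; cbn [s1]; [lra|].
  pose proof (IHn f g ltac:(intros; apply H; lia)). pose proof (H (Z.of_nat n) ltac:(lia)). lra.
Qed.

Lemma s1_single : forall n f i0, (forall i, (0 <= i < Z.of_nat n)%Z -> 0 <= f i) ->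
  (0 <= i0 < Z.of_nat n)%Z -> f i0 <= s1 n f.
Proof.
  induction n; intros f i0 H Hi; cbn [s1]; [lia|].
  assert (0 <= s1 n f).
  { replace 0 with (s1 n (fun _ => 0)). apply s1_le. intros; apply H; lia.
    clear; induction n; simpl; [auto| rewrite IHn; ring]. }
  destruct (Z.eq_dec i0 (Z.of_nat n)) as [->|Hne].
  - lra.
  - pose proof (IHn f i0 ltac:(intros; apply H; lia) ltac:(lia)).
    pose proof (H (Z.of_nat n) ltac:(lia)). lra.
Qed.

Lemma s1_shift : forall n f, s1 n (fun i => f (i + 1)%Z) = s1 n f + f (Z.of_nat n) - f 0%Z.
Proof.
  induction n; intros; cbn [s1]; [simpl; ring|]. rewrite IHn.
  replace (Z.of_nat n + 1)%Z with (Z.of_nat (S n)) by lia. ring.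
Qed.

Lemma s1_delta : forall n f a, (0 <= a < Z.of_nat n)%Z ->
  s1 n (fun i => if Z.eq_dec i a then f i else 0) = f a.
Proof.
  assert (G : forall n f a, (0 <= a)%Z ->
     s1 n (fun i => if Z.eq_dec i a then f i else 0) = if Z_lt_dec a (Z.of_nat n) then f a else 0).
  { intros n; induction n as [|n IHn]; intros f a Ha; cbn [s1].
    - simpl. destruct (Z_lt_dec a 0); [lia|auto].
    - rewrite IHn by auto.
      destruct (Z_lt_dec a (Z.of_nat n)); destruct (Z.eq_dec (Z.of_nat n) a);
      destruct (Z_lt_dec a (Z.of_nat (S n))); try lia; try ring.
      subst; ring. }
  intros n f a Ha. rewrite G by lia. destruct (Z_lt_dec a (Z.of_nat n)); [auto|lia].
Qed.

Lemma s1_lim : forall n (f : nat -> Z -> R) (l : Z -> R), (forall i, is_lim_seq (fun m => f m i) (l i)) ->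
  is_lim_seq (fun m => s1 n (f m)) (s1 n l).
Proof.
  induction n; intros f l H; cbn [s1].
  - apply is_lim_seq_const.
  - apply is_lim_seq_plus'; [apply IHn; auto | apply H].
Qed.

Lemma s1_deriv : forall n (g : Z -> R -> R) g' x, (forall i, derivable_pt_lim (g i) x (g' i)) ->
  derivable_pt_lim (fun t => s1 n (fun i => g i t)) x (s1 n g').
Proof.
  induction n; intros g g' x H; cbn [s1].
  - apply derivable_pt_lim_const.
  - apply (derivable_pt_lim_plus (fun t => s1 n (fun i => g i t)) (g (Z.of_nat n))); auto.
Qed.

Lemma s1_minpos : forall n f, (forall i, (0 <= i < Z.of_nat n)%Z -> 0 < f i) ->
  exists c, 0 < c /\ forall i, (0 <= i < Z.of_nat n)%Z -> c <= f i.
Proof.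
  induction n; intros f H.
  - exists 1. split; [lra|]. intros; lia.
  - destruct (IHn f ltac:(intros; apply H; lia)) as [c [Hc Hc']].
    pose proof (H (Z.of_nat n) ltac:(lia)).
    exists (Rmin c (f (Z.of_nat n))). split; [apply Rmin_pos; lra|].
    intros i Hi. destruct (Z.eq_dec i (Z.of_nat n)) as [->|].
    + apply Rmin_r.
    + pose proof (Hc' i ltac:(lia)). pose proof (Rmin_l c (f (Z.of_nat n))). lra.
Qed.

Definition Sg (N : nat) (f : grid) : R :=
  s1 N (fun i => s1 N (fun j => s1 N (fun k => f i j k))).

Definition inb (N : nat) (i : Z) : Prop := (0 <= i < Z.of_nat N)%Z.

Lemma Sg_ext : forall N f g, (forall i j k, inb N i -> inb N j -> inb N k -> f i j k = g i j k) ->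
  Sg N f = Sg N g.
Proof.
  intros N f g H. unfold Sg. apply s1_ext; intros i Hi. apply s1_ext; intros j Hj.
  apply s1_ext; intros k Hk. apply H; auto.
Qed.

Lemma Sg_plus : forall N f g, Sg N (fun i j k => f i j k + g i j k) = Sg N f + Sg N g.
Proof.
  intros. unfold Sg. rewrite <- s1_plus. apply s1_ext; intros.
  rewrite <- s1_plus. apply s1_ext; intros. apply s1_plus.
Qed.

Lemma Sg_scal : forall N c f, Sg N (fun i j k => c * f i j k) = c * Sg N f.
Proof.
  intros. unfold Sg. rewrite <- s1_scal. apply s1_ext; intros.
  rewrite <- s1_scal. apply s1_ext; intros. apply s1_scal.
Qed.

Lemma Sg_minus : forall N f g, Sg N (fun i j k => f i j k - g i j k) = Sg N f - Sg N g.
Proof.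
  intros. unfold Sg. rewrite <- s1_minus. apply s1_ext; intros.
  rewrite <- s1_minus. apply s1_ext; intros. apply s1_minus.
Qed.

Lemma Sg_le : forall N f g, (forall i j k, inb N i -> inb N j -> inb N k -> f i j k <= g i j k) ->
  Sg N f <= Sg N g.
Proof.
  intros N f g H. unfold Sg. apply s1_le; intros i Hi. apply s1_le; intros j Hj.
  apply s1_le; intros k Hk. apply H; auto.
Qed.

Lemma Sg_zero : forall N, Sg N (fun _ _ _ => 0) = 0.
Proof.
  intros. replace (Sg N (fun _ _ _ => 0)) with (Sg N (fun i j k => 0 * 0)).
  rewrite (Sg_scal N 0 (fun _ _ _ => 0)). ring. apply Sg_ext; intros; ring.
Qed.

Lemma Sg_nonneg : forall N f, (forall i j k, inb N i -> inb N j -> inb N k -> 0 <= f i j k) ->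
  0 <= Sg N f.
Proof. intros. rewrite <- (Sg_zero N). apply Sg_le; auto. Qed.

Lemma s1_nonneg : forall n f, (forall i, (0 <= i < Z.of_nat n)%Z -> 0 <= f i) -> 0 <= s1 n f.
Proof.
  intros n f H. replace 0 with (s1 n (fun _ => 0)). apply s1_le; auto.
  clear; induction n; cbn [s1]; [auto| rewrite IHn; ring].
Qed.

Lemma Sg_single : forall N f i0 j0 k0, (forall i j k, inb N i -> inb N j -> inb N k -> 0 <= f i j k) ->
  inb N i0 -> inb N j0 -> inb N k0 -> f i0 j0 k0 <= Sg N f.
Proof.
  intros N f i0 j0 k0 H Hi Hj Hk. unfold Sg.
  assert (A1 : f i0 j0 k0 <= s1 N (fun k => f i0 j0 k)).
  { apply (s1_single _ (fun k => f i0 j0 k) k0); [intros; apply H; auto | exact Hk]. }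
  assert (A2 : s1 N (fun k => f i0 j0 k) <= s1 N (fun j => s1 N (fun k => f i0 j k))).
  { apply (s1_single _ (fun j => s1 N (fun k => f i0 j k)) j0); [|exact Hj].
    intros j Hj'. apply s1_nonneg; intros; apply H; auto. }
  assert (A3 : s1 N (fun j => s1 N (fun k => f i0 j k)) <= s1 N (fun i => s1 N (fun j => s1 N (fun k => f i j k)))).
  { apply (s1_single _ (fun i => s1 N (fun j => s1 N (fun k => f i j k))) i0); [|exact Hi].
    intros i Hi'. apply s1_nonneg; intros; apply s1_nonneg; intros; apply H; auto. }
  lra.
Qed.

Lemma s1_zero : forall n, s1 n (fun _ => 0) = 0.
Proof. induction n; cbn [s1]; [auto| rewrite IHn; ring]. Qed.

Lemma Sg_lim : forall N (f : nat -> grid) (l : grid),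
  (forall i j k, is_lim_seq (fun m => f m i j k) (l i j k)) ->
  is_lim_seq (fun m => Sg N (f m)) (Sg N l).
Proof.
  intros N f l H. unfold Sg.
  apply (s1_lim N (fun m i => s1 N (fun j => s1 N (fun k => f m i j k)))
                  (fun i => s1 N (fun j => s1 N (fun k => l i j k)))).
  intros i. apply (s1_lim N (fun m j => s1 N (fun k => f m i j k)) (fun j => s1 N (fun k => l i j k))).
  intros j. apply (s1_lim N (fun m k => f m i j k) (fun k => l i j k)).
  intros k. apply H.
Qed.

Lemma Sg_deriv : forall N (g : Z -> Z -> Z -> R -> R) (g' : grid) x,
  (forall i j k, derivable_pt_lim (g i j k) x (g' i j k)) ->
  derivable_pt_lim (fun t => Sg N (fun i j k => g i j k t)) x (Sg N g').
Proof.
  intros N g g' x H. unfold Sg.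
  apply (s1_deriv N (fun i t => s1 N (fun j => s1 N (fun k => g i j k t)))
                  (fun i => s1 N (fun j => s1 N (fun k => g' i j k)))).
  intros i. apply (s1_deriv N (fun j t => s1 N (fun k => g i j k t)) (fun j => s1 N (fun k => g' i j k))).
  intros j. apply (s1_deriv N (fun k t => g i j k t) (fun k => g' i j k)).
  intros k. apply H.
Qed.

Lemma fin_unif : forall n (P : Z -> R -> Prop),
  (forall i c c', 0 < c' <= c -> P i c -> P i c') ->
  (forall i, (0 <= i < Z.of_nat n)%Z -> exists c, 0 < c /\ P i c) ->
  exists c, 0 < c /\ forall i, (0 <= i < Z.of_nat n)%Z -> P i c.
Proof.
  induction n; intros P Hm H.
  - exists 1. split; [lra|]. intros; lia.
  - destruct (IHn P Hm ltac:(intros; apply H; lia)) as [c [Hc Hc']].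
    destruct (H (Z.of_nat n) ltac:(lia)) as [c2 [Hc2 Hc2']].
    exists (Rmin c c2). split; [apply Rmin_pos; lra|].
    intros i Hi. destruct (Z.eq_dec i (Z.of_nat n)) as [->|].
    + apply (Hm _ c2); auto. split; [apply Rmin_pos; lra| apply Rmin_r].
    + apply (Hm _ c); auto. split; [apply Rmin_pos; lra| apply Rmin_l]. apply Hc'; lia.
Qed.

Lemma Sg_minpos : forall N (f : grid),
  (forall i j k, inb N i -> inb N j -> inb N k -> 0 < f i j k) ->
  exists c, 0 < c /\ forall i j k, inb N i -> inb N j -> inb N k -> c <= f i j k.
Proof.
  intros N f H.
  destruct (fin_unif N (fun i c => forall j, inb N j -> forall k, inb N k -> c <= f i j k)) as [c [Hc Hc']].
  - intros i c c' Hcc HP j Hj k Hk. pose proof (HP j Hj k Hk). lra.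
  - intros i Hi.
    apply (fin_unif N (fun j c => forall k, inb N k -> c <= f i j k)).
    + intros j c c' Hcc HP k Hk. pose proof (HP k Hk). lra.
    + intros j Hj.
      apply (fin_unif N (fun k c => c <= f i j k)).
      * intros; lra.
      * intros k Hk. exists (f i j k). split; [apply H; auto | lra].
  - exists c. split; auto.
Qed.

Section Per.
Variable N : nat.

Lemma per_q1 : forall v, periodic N v -> forall q i j k, v (i + Z.of_nat N * q)%Z j k = v i j k.
Proof.
  intros v Hv.
  assert (Hn : forall (m : nat) i j k, v (i + Z.of_nat N * Z.of_nat m)%Z j k = v i j k).
  { induction m; intros.
    - rewrite Z.mul_0_r, Z.add_0_r. auto.
    - replace (i + Z.of_nat N * Z.of_nat (S m))%Z with ((i + Z.of_nat N * Z.of_nat m) + Z.of_nat N)%Z by lia.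
      rewrite (proj1 (Hv _ j k)). auto. }
  intros q i j k. destruct (Z_le_gt_dec 0 q).
  - replace q with (Z.of_nat (Z.to_nat q)) by lia. apply Hn.
  - rewrite <- (Hn (Z.to_nat (- q)) (i + Z.of_nat N * q)%Z j k).
    f_equal. lia.
Qed.

Lemma per_q2 : forall v, periodic N v -> forall q i j k, v i (j + Z.of_nat N * q)%Z k = v i j k.
Proof.
  intros v Hv.
  assert (Hn : forall (m : nat) i j k, v i (j + Z.of_nat N * Z.of_nat m)%Z k = v i j k).
  { induction m; intros.
    - rewrite Z.mul_0_r, Z.add_0_r. auto.
    - replace (j + Z.of_nat N * Z.of_nat (S m))%Z with ((j + Z.of_nat N * Z.of_nat m) + Z.of_nat N)%Z by lia.
      rewrite (proj1 (proj2 (Hv i _ k))). auto. }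
  intros q i j k. destruct (Z_le_gt_dec 0 q).
  - replace q with (Z.of_nat (Z.to_nat q)) by lia. apply Hn.
  - rewrite <- (Hn (Z.to_nat (- q)) i (j + Z.of_nat N * q)%Z k).
    f_equal. lia.
Qed.

Lemma per_q3 : forall v, periodic N v -> forall q i j k, v i j (k + Z.of_nat N * q)%Z = v i j k.
Proof.
  intros v Hv.
  assert (Hn : forall (m : nat) i j k, v i j (k + Z.of_nat N * Z.of_nat m)%Z = v i j k).
  { induction m; intros.
    - rewrite Z.mul_0_r, Z.add_0_r. auto.
    - replace (k + Z.of_nat N * Z.of_nat (S m))%Z with ((k + Z.of_nat N * Z.of_nat m) + Z.of_nat N)%Z by lia.
      rewrite (proj2 (proj2 (Hv i j _))). auto. }
  intros q i j k. destruct (Z_le_gt_dec 0 q).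
  - replace q with (Z.of_nat (Z.to_nat q)) by lia. apply Hn.
  - rewrite <- (Hn (Z.to_nat (- q)) i j (k + Z.of_nat N * q)%Z).
    f_equal. lia.
Qed.

Lemma inb_mod : (0 < N)%nat -> forall i, inb N (i mod Z.of_nat N).
Proof. intros HN i. unfold inb. apply Z.mod_pos_bound. lia. Qed.

Lemma per_red : (0 < N)%nat -> forall v, periodic N v -> forall i j k,
  v i j k = v (i mod Z.of_nat N)%Z (j mod Z.of_nat N)%Z (k mod Z.of_nat N)%Z.
Proof.
  intros HN v Hv i j k.
  assert (Hz : Z.of_nat N <> 0%Z) by lia.
  rewrite (Z.div_mod i (Z.of_nat N) Hz) at 1.
  rewrite (Z.div_mod j (Z.of_nat N) Hz) at 1.
  rewrite (Z.div_mod k (Z.of_nat N) Hz) at 1.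
  rewrite (Z.add_comm (Z.of_nat N * (i / Z.of_nat N))).
  rewrite (Z.add_comm (Z.of_nat N * (j / Z.of_nat N))).
  rewrite (Z.add_comm (Z.of_nat N * (k / Z.of_nat N))).
  rewrite per_q1, per_q2, per_q3; auto.
Qed.

Lemma per_map1 : forall a (op : R -> R), periodic N a -> periodic N (fun i j k => op (a i j k)).
Proof. intros a op H i j k. destruct (H i j k) as [H1 [H2 H3]]. rewrite H1, H2, H3. auto. Qed.

Lemma per_map2 : forall a b (op : R -> R -> R), periodic N a -> periodic N b ->
  periodic N (fun i j k => op (a i j k) (b i j k)).
Proof.
  intros a b op Ha Hb i j k. destruct (Ha i j k) as [H1 [H2 H3]]. destruct (Hb i j k) as [G1 [G2 G3]].
  rewrite H1, H2, H3, G1, G2, G3. auto.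
Qed.

Lemma per_const : forall c, periodic N (fun _ _ _ => c).
Proof. intros c i j k. auto. Qed.

Lemma per_lap : forall h v, periodic N v -> periodic N (lap_h h v).
Proof.
  intros h v Hv i j k. unfold lap_h.
  assert (E1 : forall i j k, v (i + Z.of_nat N)%Z j k = v i j k) by (intros; apply Hv).
  assert (E2 : forall i j k, v i (j + Z.of_nat N)%Z k = v i j k) by (intros; apply Hv).
  assert (E3 : forall i j k, v i j (k + Z.of_nat N)%Z = v i j k) by (intros; apply Hv).
  repeat split.
  - replace (i + Z.of_nat N + 1)%Z with (i + 1 + Z.of_nat N)%Z by lia.
    replace (i + Z.of_nat N - 1)%Z with (i - 1 + Z.of_nat N)%Z by lia.
    rewrite !E1. auto.
  - replace (j + Z.of_nat N + 1)%Z with (j + 1 + Z.of_nat N)%Z by lia.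
    replace (j + Z.of_nat N - 1)%Z with (j - 1 + Z.of_nat N)%Z by lia.
    rewrite !E2. auto.
  - replace (k + Z.of_nat N + 1)%Z with (k + 1 + Z.of_nat N)%Z by lia.
    replace (k + Z.of_nat N - 1)%Z with (k - 1 + Z.of_nat N)%Z by lia.
    rewrite !E3. auto.
Qed.

Lemma Sg_shift1 : forall F, periodic N F -> Sg N (fun i j k => F (i + 1)%Z j k) = Sg N F.
Proof.
  intros F HF. unfold Sg.
  rewrite (s1_shift N (fun i => s1 N (fun j => s1 N (fun k => F i j k)))).
  assert (s1 N (fun j => s1 N (fun k => F (Z.of_nat N) j k)) = s1 N (fun j => s1 N (fun k => F 0%Z j k))).
  { apply s1_ext; intros; apply s1_ext; intros. rewrite <- (proj1 (HF 0%Z _ _)). auto. }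
  rewrite H. ring.
Qed.

Lemma Sg_shift2 : forall F, periodic N F -> Sg N (fun i j k => F i (j + 1)%Z k) = Sg N F.
Proof.
  intros F HF. unfold Sg. apply s1_ext; intros i Hi.
  rewrite (s1_shift N (fun j => s1 N (fun k => F i j k))).
  assert (s1 N (fun k => F i (Z.of_nat N) k) = s1 N (fun k => F i 0%Z k)).
  { apply s1_ext; intros. rewrite <- (proj1 (proj2 (HF i 0%Z _))). auto. }
  rewrite H. ring.
Qed.

Lemma Sg_shift3 : forall F, periodic N F -> Sg N (fun i j k => F i j (k + 1)%Z) = Sg N F.
Proof.
  intros F HF. unfold Sg. apply s1_ext; intros i Hi. apply s1_ext; intros j Hj.
  rewrite (s1_shift N (fun k => F i j k)).
  rewrite <- (proj2 (proj2 (HF i j 0%Z))). simpl. ring.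
Qed.

Definition d1 (a i : Z) : R := if Z.eq_dec (i mod Z.of_nat N) a then 1 else 0.
Definition dl (x1 x2 x3 : Z) : grid := fun i j k => d1 x1 i * d1 x2 j * d1 x3 k.

Lemma per_dl : forall x1 x2 x3, periodic N (dl x1 x2 x3).
Proof.
  intros x1 x2 x3 i j k. unfold dl, d1.
  assert (E : forall i, ((i + Z.of_nat N) mod Z.of_nat N = i mod Z.of_nat N)%Z).
  { intros. rewrite <- (Z.mul_1_l (Z.of_nat N)) at 1. apply Z_mod_plus_full. }
  rewrite !E. auto.
Qed.

Lemma dl_range : forall x1 x2 x3 i j k, 0 <= dl x1 x2 x3 i j k <= 1.
Proof.
  intros. unfold dl, d1.
  destruct (Z.eq_dec (i mod Z.of_nat N) x1); destruct (Z.eq_dec (j mod Z.of_nat N) x2);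
  destruct (Z.eq_dec (k mod Z.of_nat N) x3); lra.
Qed.

Lemma s1_if : forall n (b : bool) g, s1 n (fun k => if b then g k else 0) = if b then s1 n g else 0.
Proof. intros. destruct b; auto. apply s1_zero. Qed.

Lemma Sg_delta : forall f x1 x2 x3, inb N x1 -> inb N x2 -> inb N x3 ->
  Sg N (fun i j k => f i j k * dl x1 x2 x3 i j k) = f x1 x2 x3.
Proof.
  intros f x1 x2 x3 H1 H2 H3.
  transitivity (Sg N (fun i j k => if Z.eq_dec i x1 then (if Z.eq_dec j x2 then
       (if Z.eq_dec k x3 then f i j k else 0) else 0) else 0)).
  - apply Sg_ext. intros i j k Hi Hj Hk. unfold dl, d1.
    unfold inb in *. rewrite !Z.mod_small by lia.
    destruct (Z.eq_dec i x1); destruct (Z.eq_dec j x2); destruct (Z.eq_dec k x3); ring.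
  - unfold Sg.
    transitivity (s1 N (fun i => if Z.eq_dec i x1 then s1 N (fun j => if Z.eq_dec j x2 then
       s1 N (fun k => if Z.eq_dec k x3 then f i j k else 0) else 0) else 0)).
    + apply s1_ext; intros i _. destruct (Z.eq_dec i x1).
      * apply s1_ext; intros j _. destruct (Z.eq_dec j x2); auto. apply s1_zero.
      * transitivity (s1 N (fun _ => 0)); [|apply s1_zero]. apply s1_ext; intros j _.
        apply s1_zero.
    + rewrite s1_delta by exact H1. rewrite s1_delta by exact H2. rewrite s1_delta by exact H3. auto.
Qed.

End Per.

Section BrS.
Variable N : nat.
Variable h : R.
Hypothesis Hh : h <> 0.

Definition Br (a b : grid) : R :=
  / h ^ 2 * Sg N (fun i j k =>
     (a (i+1)%Z j k - a i j k) * (b (i+1)%Z j k - b i j k) +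
     (a i (j+1)%Z k - a i j k) * (b i (j+1)%Z k - b i j k) +
     (a i j (k+1)%Z - a i j k) * (b i j (k+1)%Z - b i j k)).

Lemma Sg_zs1 : forall F, periodic N F -> Sg N (fun i j k => F (i+1)%Z j k - F i j k) = 0.
Proof. intros. rewrite Sg_minus, Sg_shift1 by auto. ring. Qed.
Lemma Sg_zs2 : forall F, periodic N F -> Sg N (fun i j k => F i (j+1)%Z k - F i j k) = 0.
Proof. intros. rewrite Sg_minus, Sg_shift2 by auto. ring. Qed.
Lemma Sg_zs3 : forall F, periodic N F -> Sg N (fun i j k => F i j (k+1)%Z - F i j k) = 0.
Proof. intros. rewrite Sg_minus, Sg_shift3 by auto. ring. Qed.

Lemma per_sh1 : forall v, periodic N v -> periodic N (fun i j k => v (i-1)%Z j k).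
Proof.
  intros v Hv i j k. replace (i + Z.of_nat N - 1)%Z with (i - 1 + Z.of_nat N)%Z by lia.
  destruct (Hv (i-1)%Z j k) as [A [B C]]. auto.
Qed.
Lemma per_sh2 : forall v, periodic N v -> periodic N (fun i j k => v i (j-1)%Z k).
Proof.
  intros v Hv i j k. replace (j + Z.of_nat N - 1)%Z with (j - 1 + Z.of_nat N)%Z by lia.
  destruct (Hv i (j-1)%Z k) as [A [B C]]. auto.
Qed.
Lemma per_sh3 : forall v, periodic N v -> periodic N (fun i j k => v i j (k-1)%Z).
Proof.
  intros v Hv i j k. replace (k + Z.of_nat N - 1)%Z with (k - 1 + Z.of_nat N)%Z by lia.
  destruct (Hv i j (k-1)%Z) as [A [B C]]. auto.
Qed.

Lemma Br_lap : forall a b, periodic N a -> periodic N b ->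
  Br a b = - Sg N (fun i j k => a i j k * lap_h h b i j k).
Proof.
  intros a b Ha Hb. unfold Br.
  set (P := fun i j k => a i j k * b i j k).
  set (G1 := fun i j k => a i j k * b (i-1)%Z j k).
  set (G2 := fun i j k => a i j k * b i (j-1)%Z k).
  set (G3 := fun i j k => a i j k * b i j (k-1)%Z).
  assert (HP : periodic N P) by (apply per_map2; auto).
  assert (HG1 : periodic N G1) by (apply per_map2; auto; apply per_sh1; auto).
  assert (HG2 : periodic N G2) by (apply per_map2; auto; apply per_sh2; auto).
  assert (HG3 : periodic N G3) by (apply per_map2; auto; apply per_sh3; auto).
  rewrite (Sg_ext N _ (fun i j k => (- h^2) * (a i j k * lap_h h b i j k) +
     ((((P (i+1)%Z j k - P i j k) + (P i (j+1)%Z k - P i j k)) + (P i j (k+1)%Z - P i j k))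
      - (((G1 (i+1)%Z j k - G1 i j k) + (G2 i (j+1)%Z k - G2 i j k)) + (G3 i j (k+1)%Z - G3 i j k))))).
  - rewrite Sg_plus, Sg_scal, Sg_minus, !Sg_plus, Sg_zs1, Sg_zs2, Sg_zs3, Sg_zs1, Sg_zs2, Sg_zs3 by auto.
    field. auto.
  - intros i j k _ _ _. unfold P, G1, G2, G3, lap_h.
    rewrite !Z.add_simpl_r. field. auto.
Qed.

Lemma Br_sym : forall a b, Br a b = Br b a.
Proof. intros. unfold Br. f_equal. apply Sg_ext; intros; ring. Qed.

Lemma lap_sym : forall a b, periodic N a -> periodic N b ->
  Sg N (fun i j k => a i j k * lap_h h b i j k) = Sg N (fun i j k => lap_h h a i j k * b i j k).
Proof.
  intros a b Ha Hb.
  assert (E : Br a b = Br b a) by apply Br_sym.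
  rewrite !Br_lap in E by auto.
  rewrite (Sg_ext N (fun i j k => lap_h h a i j k * b i j k) (fun i j k => b i j k * lap_h h a i j k))
    by (intros; ring).
  lra.
Qed.

Lemma h2pos : 0 < h ^ 2.
Proof. replace (h^2) with (h*h) by ring. apply Rsqr_pos_lt; auto. Qed.

Lemma Br_nonneg : forall a, 0 <= Br a a.
Proof.
  intros a. unfold Br. apply Rmult_le_pos.
  - left. apply Rinv_0_lt_compat. apply h2pos.
  - apply Sg_nonneg. intros. cbv beta. apply Rplus_le_le_0_compat; [apply Rplus_le_le_0_compat|]; apply Rle_0_sqr.
Qed.

End BrS.

Section Energy.
Variable N : nat.
Variable h e2 th tau : R.
Variable un : grid.
Hypothesis Hh : h <> 0.
Hypothesis He2 : 0 <= e2.
Hypothesis Htau : 0 < tau.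
Hypothesis Hth : 0 < th.
Hypothesis Hun : forall i j k, -1 < un i j k < 1.
Hypothesis Hunp : periodic N un.

Definition uof (w : grid) : grid := fun i j k => un i j k + tau * lap_h h w i j k.
Definition Gr (v : grid) : R := Br N h v v.
Definition Pe (w : grid) : R := Sg N (fun i j k => Phi (uof w i j k)).
Definition Rr (w : grid) : R :=
  e2 / 2 * Gr (uof w) - th * Sg N (fun i j k => un i j k * uof w i j k) + tau / 2 * Gr w.
Definition J (w : grid) : R := Pe w + Rr w.
Definition feas (w : grid) : Prop := periodic N w /\ forall i j k, -1 <= uof w i j k <= 1.
Definition comb (t : R) (a b : grid) : grid := fun i j k => (1 - t) * a i j k + t * b i j k.
Definition gsub (a b : grid) : grid := fun i j k => a i j k - b i j k.

Lemma lap_comb : forall t a b i j k,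
  lap_h h (comb t a b) i j k = (1 - t) * lap_h h a i j k + t * lap_h h b i j k.
Proof. intros. unfold lap_h, comb. ring. Qed.

Lemma uof_comb : forall t a b i j k, uof (comb t a b) i j k = comb t (uof a) (uof b) i j k.
Proof. intros. unfold uof. rewrite lap_comb. unfold comb. ring. Qed.

Lemma Gr_comb : forall t p q,
  Gr (comb t p q) = (1 - t) * Gr p + t * Gr q - t * (1 - t) * Gr (gsub p q).
Proof.
  intros. unfold Gr, Br.
  set (T := fun (a : grid) i j k =>
     (a (i+1)%Z j k - a i j k) * (a (i+1)%Z j k - a i j k) +
     (a i (j+1)%Z k - a i j k) * (a i (j+1)%Z k - a i j k) +
     (a i j (k+1)%Z - a i j k) * (a i j (k+1)%Z - a i j k)).
  change (/ h ^ 2 * Sg N (T (comb t p q)) =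
   (1 - t) * (/ h ^ 2 * Sg N (T p)) + t * (/ h ^ 2 * Sg N (T q)) -
   t * (1 - t) * (/ h ^ 2 * Sg N (T (gsub p q)))).
  rewrite (Sg_ext N (T (comb t p q)) (fun i j k => (1-t) * T p i j k + t * T q i j k - (t * (1-t)) * T (gsub p q) i j k)).
  - rewrite Sg_minus, Sg_plus, !Sg_scal. ring.
  - intros. unfold T, comb, gsub. ring.
Qed.

Lemma lap_per : forall w, periodic N w -> periodic N (lap_h h w).
Proof. intros; apply per_lap; auto. Qed.

Lemma uof_per : forall w, periodic N w -> periodic N (uof w).
Proof.
  intros w Hw. unfold uof. apply (per_map2 N un (lap_h h w) (fun x y => x + tau * y)); auto.
  apply per_lap; auto.
Qed.

Lemma comb_per : forall t a b, periodic N a -> periodic N b -> periodic N (comb t a b).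
Proof. intros. unfold comb. apply (per_map2 N a b (fun x y => (1-t)*x + t*y)); auto. Qed.

Lemma gsub_per : forall a b, periodic N a -> periodic N b -> periodic N (gsub a b).
Proof. intros. unfold gsub. apply (per_map2 N a b (fun x y => x - y)); auto. Qed.

Lemma feas_comb : forall t a b, 0 <= t <= 1 -> feas a -> feas b -> feas (comb t a b).
Proof.
  intros t a b Ht [Ha Ha'] [Hb Hb']. split.
  - apply comb_per; auto.
  - intros. rewrite uof_comb. unfold comb. pose proof (Ha' i j k). pose proof (Hb' i j k). nra.
Qed.

Lemma Gr_nonneg : forall v, 0 <= Gr v.
Proof. intros. apply Br_nonneg; auto. Qed.

Lemma Rr_convex : forall t a b, 0 <= t <= 1 ->
  Rr (comb t a b) <= (1 - t) * Rr a + t * Rr b - t * (1 - t) * (tau / 2) * Gr (gsub a b).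
Proof.
  intros t a b Ht. unfold Rr.
  assert (E : uof (comb t a b) = comb t (uof a) (uof b)).
  { do 3 (apply functional_extensionality; intro). apply uof_comb. }
  rewrite E, !Gr_comb.
  rewrite (Sg_ext N (fun i j k => un i j k * comb t (uof a) (uof b) i j k)
             (fun i j k => (1-t) * (un i j k * uof a i j k) + t * (un i j k * uof b i j k)))
    by (intros; unfold comb; ring).
  rewrite Sg_plus, !Sg_scal.
  pose proof (Gr_nonneg (gsub (uof a) (uof b))).
  assert (0 <= t * (1 - t)) by nra.
  assert (0 <= e2 / 2 * (t * (1 - t) * Gr (gsub (uof a) (uof b)))) by (apply Rmult_le_pos; [lra| apply Rmult_le_pos; lra]).
  nra.
Qed.

Lemma Pe_convex : forall t a b, 0 <= t <= 1 -> feas a -> feas b ->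
  Pe (comb t a b) <= (1 - t) * Pe a + t * Pe b.
Proof.
  intros t a b Ht [Ha Ha'] [Hb Hb']. unfold Pe.
  rewrite <- !Sg_scal, <- Sg_plus. apply Sg_le. intros i j k _ _ _.
  rewrite uof_comb. unfold comb. apply Phi_convex; auto.
Qed.

Lemma J_convex : forall t a b, 0 <= t <= 1 -> feas a -> feas b ->
  J (comb t a b) <= (1 - t) * J a + t * J b - t * (1 - t) * (tau / 2) * Gr (gsub a b).
Proof.
  intros. unfold J. pose proof (Pe_convex t a b H H0 H1). pose proof (Rr_convex t a b H). lra.
Qed.

Definition shc (w : grid) (c : R) : grid := fun i j k => w i j k - c.

Lemma uof_shc : forall w c i j k, uof (shc w c) i j k = uof w i j k.
Proof. intros. unfold uof, lap_h, shc. field. auto. Qed.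

Lemma Gr_shc : forall w c, Gr (shc w c) = Gr w.
Proof. intros. unfold Gr, Br. f_equal. apply Sg_ext. intros. unfold shc. ring. Qed.

Lemma J_shc : forall w c, J (shc w c) = J w.
Proof.
  intros. assert (E : uof (shc w c) = uof w).
  { do 3 (apply functional_extensionality; intro). apply uof_shc. }
  unfold J, Pe, Rr. rewrite E, Gr_shc. auto.
Qed.

Lemma feas_shc : forall w c, feas w -> feas (shc w c).
Proof.
  intros w c [Hw Hw']. split.
  - unfold shc. apply (per_map1 N w (fun x => x - c)); auto.
  - intros. rewrite uof_shc. auto.
Qed.

Lemma J_lower : forall w, feas w -> - th * Sg N (fun _ _ _ => 1) <= J w.
Proof.
  intros w [Hw Hw']. unfold J, Pe, Rr.
  assert (0 <= Sg N (fun i j k => Phi (uof w i j k))).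
  { apply Sg_nonneg. intros. apply Phi_nonneg. auto. }
  assert (Sg N (fun i j k => un i j k * uof w i j k) <= Sg N (fun _ _ _ => 1)).
  { apply Sg_le. intros. pose proof (Hw' i j k). pose proof (Hun i j k). cbv beta. nra. }
  pose proof (Gr_nonneg (uof w)). pose proof (Gr_nonneg w).
  assert (0 <= e2 / 2 * Gr (uof w)) by (apply Rmult_le_pos; lra).
  assert (0 <= tau / 2 * Gr w) by (apply Rmult_le_pos; lra).
  assert (th * Sg N (fun i j k => un i j k * uof w i j k) <= th * Sg N (fun _ _ _ => 1))
    by (apply Rmult_le_compat_l; lra).
  lra.
Qed.

Lemma feas0 : feas (fun _ _ _ => 0).
Proof.
  split. apply per_const. intros. unfold uof, lap_h. pose proof (Hun i j k).
  replace (/ h ^ 2 * (0 + 0 + 0 + 0 + 0 + 0 - 6 * 0)) with 0 by ring. lra.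
Qed.

Lemma lim_scal : forall (u : nat -> R) (a l : R), is_lim_seq u l -> is_lim_seq (fun n => a * u n) (a * l).
Proof. intros. apply is_lim_seq_mult'; auto. apply is_lim_seq_const. Qed.

Definition ptlim (w : nat -> grid) (W : grid) : Prop :=
  forall i j k, is_lim_seq (fun m => w m i j k) (W i j k).

Lemma lap_lim : forall w W, ptlim w W -> ptlim (fun m => lap_h h (w m)) (lap_h h W).
Proof.
  intros w W H i j k. unfold lap_h.
  apply lim_scal.
  apply is_lim_seq_minus'; [|apply lim_scal; apply H].
  repeat apply is_lim_seq_plus'; apply H.
Qed.

Lemma uof_lim : forall w W, ptlim w W -> ptlim (fun m => uof (w m)) (uof W).
Proof.
  intros w W H i j k. unfold uof. apply is_lim_seq_plus'. apply is_lim_seq_const.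
  apply lim_scal. apply lap_lim; auto.
Qed.

Lemma Gr_lim : forall w W, ptlim w W -> is_lim_seq (fun m => Gr (w m)) (Gr W).
Proof.
  intros w W H. unfold Gr, Br. apply lim_scal. apply Sg_lim. intros i j k.
  repeat apply is_lim_seq_plus'; apply is_lim_seq_mult'; apply is_lim_seq_minus'; apply H.
Qed.

Lemma J_lim : forall w W, ptlim w W -> is_lim_seq (fun m => J (w m)) (J W).
Proof.
  intros w W H. pose proof (uof_lim w W H) as Hu. unfold J, Pe, Rr.
  apply is_lim_seq_plus'; [|apply is_lim_seq_plus'; [apply is_lim_seq_minus'|]].
  - apply Sg_lim. intros. apply is_lim_seq_continuous. apply Phi_cont. apply Hu.
  - apply lim_scal. apply Gr_lim. auto.
  - apply lim_scal. apply Sg_lim. intros. apply is_lim_seq_mult'. apply is_lim_seq_const. apply Hu.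
  - apply lim_scal. apply Gr_lim. auto.
Qed.

End Energy.

Lemma inv_small : forall d, 0 < d -> exists n0 : nat, forall n, (n0 <= n)%nat -> / INR (S n) < d.
Proof.
  intros d Hd. destruct (archimed (/ d)) as [H1 _].
  exists (Z.to_nat (up (/ d))). intros n Hn.
  assert (0 < / d) by (apply Rinv_0_lt_compat; auto).
  assert (Hup : (0 <= up (/ d))%Z).
  { apply le_IZR. simpl. lra. }
  assert (INR (Z.to_nat (up (/d))) = IZR (up (/ d))).
  { rewrite INR_IZR_INZ. rewrite Z2Nat.id; auto. }
  assert (INR (Z.to_nat (up (/ d))) <= INR n) by (apply le_INR; auto).
  rewrite S_INR.
  assert (/ d < INR n + 1) by lra.
  replace d with (/ / d) by (field; lra).
  apply Rinv_lt_contravar; auto. apply Rmult_lt_0_compat; lra.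
Qed.

Section Min.
Variable N : nat.
Variable h e2 th tau : R.
Variable un : grid.
Hypothesis HN : (0 < N)%nat.
Hypothesis Hh : h <> 0.
Hypothesis He2 : 0 <= e2.
Hypothesis Htau : 0 < tau.
Hypothesis Hth : 0 < th.
Hypothesis Hun : forall i j k, -1 < un i j k < 1.
Hypothesis Hunp : periodic N un.

Local Notation JJ := (J N h e2 th tau un).
Local Notation FF := (feas N h tau un).
Local Notation GG := (Gr N h).

Lemma inf_exists : exists m, (forall w, FF w -> m <= JJ w) /\
  forall d, 0 < d -> exists w, FF w /\ JJ w < m + d.
Proof.
  set (E := fun x => exists w, FF w /\ x = - JJ w).
  assert (Hb : bound E).
  { exists (th * Sg N (fun _ _ _ => 1)). intros x [w [Hw ->]].
    pose proof (J_lower N h e2 th tau un Hh He2 Htau Hth Hun w Hw). lra. }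
  assert (Hne : exists x, E x).
  { exists (- JJ (fun _ _ _ => 0)). exists (fun _ _ _ => 0). split; auto.
    apply feas0; auto. }
  destruct (completeness E Hb Hne) as [M [HM1 HM2]].
  exists (- M). split.
  - intros w Hw. assert (E (- JJ w)) by (exists w; auto). pose proof (HM1 _ H). lra.
  - intros d Hd. apply NNPP. intro Hn.
    assert (is_upper_bound E (M - d)).
    { intros x [w [Hw ->]]. destruct (Rle_dec (- JJ w) (M - d)); auto.
      exfalso. apply Hn. exists w. split; auto. lra. }
    pose proof (HM2 _ H). lra.
Qed.

Lemma Gr_diff_small : forall m a b da db, (forall w, FF w -> m <= JJ w) ->
  FF a -> FF b -> JJ a <= m + da -> JJ b <= m + db ->
  GG (gsub a b) <= 4 / tau * (da + db).
Proof.
  intros m a b da db Hm Ha Hb Hja Hjb.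
  pose proof (J_convex N h e2 th tau un Hh He2 (1/2) a b ltac:(lra) Ha Hb).
  pose proof (Hm _ (feas_comb N h tau un (1/2) a b ltac:(lra) Ha Hb)).
  assert (tau / 8 * GG (gsub a b) <= (da + db) / 2) by lra.
  apply (Rmult_le_reg_l (tau / 8)). lra.
  replace (tau / 8 * (4 / tau * (da + db))) with ((da + db)/2) by (field; lra). auto.
Qed.

Lemma pt_step : forall v i j k, inb N i -> inb N j -> inb N k ->
  Rabs (v (i+1)%Z j k - v i j k) <= sqrt (h^2 * GG v) /\
  Rabs (v i (j+1)%Z k - v i j k) <= sqrt (h^2 * GG v) /\
  Rabs (v i j (k+1)%Z - v i j k) <= sqrt (h^2 * GG v).
Proof.
  intros v i j k Hi Hj Hk.
  assert (E : h ^ 2 * GG v = Sg N (fun i j k =>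
     (v (i+1)%Z j k - v i j k) * (v (i+1)%Z j k - v i j k) +
     (v i (j+1)%Z k - v i j k) * (v i (j+1)%Z k - v i j k) +
     (v i j (k+1)%Z - v i j k) * (v i j (k+1)%Z - v i j k))).
  { unfold Gr, Br. field. auto. }
  pose proof (Sg_single N (fun i j k =>
     (v (i+1)%Z j k - v i j k) * (v (i+1)%Z j k - v i j k) +
     (v i (j+1)%Z k - v i j k) * (v i (j+1)%Z k - v i j k) +
     (v i j (k+1)%Z - v i j k) * (v i j (k+1)%Z - v i j k)) i j k
     ltac:(intros; cbv beta; apply Rplus_le_le_0_compat; [apply Rplus_le_le_0_compat|]; apply Rle_0_sqr) Hi Hj Hk) as H.
  cbv beta in H. rewrite <- E in H.
  assert (Hs : forall d, d * d <= h^2 * GG v -> Rabs d <= sqrt (h^2 * GG v)).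
  { intros d Hd. rewrite <- sqrt_Rsqr_abs. apply sqrt_le_1_alt. unfold Rsqr. auto. }
  repeat split; apply Hs;
  pose proof (Rle_0_sqr (v (i+1)%Z j k - v i j k));
  pose proof (Rle_0_sqr (v i (j+1)%Z k - v i j k));
  pose proof (Rle_0_sqr (v i j (k+1)%Z - v i j k)); unfold Rsqr in *; lra.
Qed.

Lemma pt_bound : forall v, periodic N v -> v 0%Z 0%Z 0%Z = 0 ->
  forall i j k, Rabs (v i j k) <= 3 * INR N * sqrt (h^2 * GG v).
Proof.
  intros v Hv H0.
  set (M := sqrt (h^2 * GG v)).
  assert (HM : 0 <= M) by apply sqrt_pos.
  assert (A1 : forall a : nat, (a < N)%nat -> Rabs (v (Z.of_nat a) 0%Z 0%Z) <= INR a * M).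
  { induction a; intros Ha.
    - simpl. rewrite H0, Rabs_R0. lra.
    - rewrite Nat2Z.inj_succ, <- Z.add_1_r, S_INR.
      destruct (pt_step v (Z.of_nat a) 0 0) as [P _]; unfold inb; try lia.
      pose proof (IHa ltac:(lia)) as IH.
      pose proof (Rabs_triang (v (Z.of_nat a + 1)%Z 0%Z 0%Z - v (Z.of_nat a) 0%Z 0%Z) (v (Z.of_nat a) 0%Z 0%Z)) as T.
      replace (v (Z.of_nat a + 1)%Z 0%Z 0%Z - v (Z.of_nat a) 0%Z 0%Z + v (Z.of_nat a) 0%Z 0%Z)
        with (v (Z.of_nat a + 1)%Z 0%Z 0%Z) in T by ring.
      fold M in P. lra. }
  assert (A2 : forall a b : nat, (a < N)%nat -> (b < N)%nat ->
            Rabs (v (Z.of_nat a) (Z.of_nat b) 0%Z) <= (INR a + INR b) * M).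
  { intros a b Ha. induction b; intros Hb.
    - simpl. pose proof (A1 a Ha). lra.
    - rewrite Nat2Z.inj_succ, <- Z.add_1_r, S_INR.
      destruct (pt_step v (Z.of_nat a) (Z.of_nat b) 0) as [_ [P _]]; unfold inb; try lia.
      pose proof (IHb ltac:(lia)) as IH.
      pose proof (Rabs_triang (v (Z.of_nat a) (Z.of_nat b + 1)%Z 0%Z - v (Z.of_nat a) (Z.of_nat b) 0%Z) (v (Z.of_nat a) (Z.of_nat b) 0%Z)) as T.
      replace (v (Z.of_nat a) (Z.of_nat b + 1)%Z 0%Z - v (Z.of_nat a) (Z.of_nat b) 0%Z + v (Z.of_nat a) (Z.of_nat b) 0%Z)
        with (v (Z.of_nat a) (Z.of_nat b + 1)%Z 0%Z) in T by ring.
      fold M in P. lra. }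
  assert (A3 : forall a b c : nat, (a < N)%nat -> (b < N)%nat -> (c < N)%nat ->
            Rabs (v (Z.of_nat a) (Z.of_nat b) (Z.of_nat c)) <= (INR a + INR b + INR c) * M).
  { intros a b c Ha Hb. induction c; intros Hc.
    - simpl. pose proof (A2 a b Ha Hb). lra.
    - rewrite Nat2Z.inj_succ, <- Z.add_1_r, S_INR.
      destruct (pt_step v (Z.of_nat a) (Z.of_nat b) (Z.of_nat c)) as [_ [_ P]]; unfold inb; try lia.
      pose proof (IHc ltac:(lia)) as IH.
      pose proof (Rabs_triang (v (Z.of_nat a) (Z.of_nat b) (Z.of_nat c + 1)%Z - v (Z.of_nat a) (Z.of_nat b) (Z.of_nat c)) (v (Z.of_nat a) (Z.of_nat b) (Z.of_nat c))) as T.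
      replace (v (Z.of_nat a) (Z.of_nat b) (Z.of_nat c + 1)%Z - v (Z.of_nat a) (Z.of_nat b) (Z.of_nat c) + v (Z.of_nat a) (Z.of_nat b) (Z.of_nat c))
        with (v (Z.of_nat a) (Z.of_nat b) (Z.of_nat c + 1)%Z) in T by ring.
      fold M in P. lra. }
  intros i j k. rewrite (per_red N HN v Hv).
  pose proof (inb_mod N HN i) as Hi. pose proof (inb_mod N HN j) as Hj. pose proof (inb_mod N HN k) as Hk.
  unfold inb in *.
  rewrite <- (Z2Nat.id (i mod Z.of_nat N)) by lia.
  rewrite <- (Z2Nat.id (j mod Z.of_nat N)) by lia.
  rewrite <- (Z2Nat.id (k mod Z.of_nat N)) by lia.
  eapply Rle_trans; [apply A3; lia|].
  assert (forall x, (0 <= x < Z.of_nat N)%Z -> INR (Z.to_nat x) <= INR N).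
  { intros. apply le_INR. lia. }
  pose proof (H _ Hi). pose proof (H _ Hj). pose proof (H _ Hk).
  nra.
Qed.

End Min.

Lemma lim_uniq : forall (u v : nat -> R) (a b : R), is_lim_seq u a -> is_lim_seq v b ->
  (forall n, u n = v n) -> a = b.
Proof.
  intros u v a b Ha Hb E.
  apply (is_lim_seq_ext u v) in Ha; auto.
  apply is_lim_seq_unique in Ha. apply is_lim_seq_unique in Hb.
  assert (E2 : Finite a = Finite b) by congruence. apply Rbar_finite_eq in E2. auto.
Qed.

Lemma inv_lim : is_lim_seq (fun n => / INR (S n)) 0.
Proof.
  apply is_lim_seq_Reals. intros eps Heps.
  destruct (inv_small eps Heps) as [n0 Hn0]. exists n0. intros n Hn.
  unfold R_dist. rewrite Rminus_0_r. rewrite Rabs_right.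
  apply Hn0; lia. left. apply Rinv_0_lt_compat, lt_0_INR; lia.
Qed.

Section Min2.
Variable N : nat.
Variable h e2 th tau : R.
Variable un : grid.
Hypothesis HN : (0 < N)%nat.
Hypothesis Hh : h <> 0.
Hypothesis He2 : 0 <= e2.
Hypothesis Htau : 0 < tau.
Hypothesis Hth : 0 < th.
Hypothesis Hun : forall i j k, -1 < un i j k < 1.
Hypothesis Hunp : periodic N un.

Local Notation JJ := (J N h e2 th tau un).
Local Notation FF := (feas N h tau un).
Local Notation GG := (Gr N h).

Lemma min_exists : exists W, FF W /\ forall v, FF v -> JJ W <= JJ v.
Proof.
  destruct (inf_exists N h e2 th tau un Hh He2 Htau Hth Hun) as [m [Hm Hd]].
  assert (Hc : forall n : nat, exists w, FF w /\ JJ w < m + / INR (S n)).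
  { intros n. apply Hd. apply Rinv_0_lt_compat, lt_0_INR; lia. }
  set (vs := fun n => proj1_sig (constructive_indefinite_description _ (Hc n))).
  assert (Hvs : forall n, FF (vs n) /\ JJ (vs n) < m + / INR (S n)).
  { intros n. unfold vs. destruct (constructive_indefinite_description _ (Hc n)); simpl; auto. }
  set (ws := fun n => shc (vs n) (vs n 0%Z 0%Z 0%Z)).
  assert (Hws : forall n, FF (ws n) /\ JJ (ws n) < m + / INR (S n) /\ ws n 0%Z 0%Z 0%Z = 0).
  { intros n. destruct (Hvs n) as [A B]. unfold ws. split; [apply feas_shc; auto|].
    rewrite J_shc by auto. split; auto. unfold shc. ring. }
  assert (Hcau : forall i j k, Cauchy_crit (fun n => ws n i j k)).
  { intros i j k eps Heps.
    set (K := 3 * INR N).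
    assert (HK : 0 <= K) by (unfold K; pose proof (pos_INR N); lra).
    set (C := h^2 * (8/tau) * (K*K)).
    assert (HC : 0 <= C).
    { unfold C. apply Rmult_le_pos; [apply Rmult_le_pos|].
      apply pow2_ge_0. left; apply Rdiv_lt_0_compat; lra. nra. }
    destruct (inv_small (eps*eps / (C + 1))) as [n0 Hn0].
    { apply Rdiv_lt_0_compat; nra. }
    exists n0. intros n p Hn Hp. unfold R_dist.
    destruct (Hws n) as [Fn [Jn On]]. destruct (Hws p) as [Fp [Jp Op]].
    pose proof (Gr_diff_small N h e2 th tau un Hh He2 Htau m (ws n) (ws p) (/ INR (S n)) (/ INR (S p))
                  Hm Fn Fp ltac:(lra) ltac:(lra)) as G.
    pose proof (Hn0 n Hn). pose proof (Hn0 p Hp).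
    set (v := gsub (ws n) (ws p)).
    assert (Pv : periodic N v) by (apply gsub_per; [destruct Fn | destruct Fp]; auto).
    assert (Ov : v 0%Z 0%Z 0%Z = 0) by (unfold v, gsub; rewrite On, Op; ring).
    pose proof (pt_bound N h HN Hh v Pv Ov i j k) as B.
    change (ws n i j k - ws p i j k) with (v i j k).
    fold K in B. fold v in G.
    pose proof (Gr_nonneg N h Hh v) as Gv.
    assert (Hx : 0 <= h^2 * GG v) by (apply Rmult_le_pos; auto; apply pow2_ge_0).
    assert (E1 : K * sqrt (h^2 * GG v) = sqrt (K * K * (h^2 * GG v))).
    { rewrite (sqrt_mult_alt (K*K) (h^2 * GG v)) by nra. rewrite sqrt_square by auto. auto. }
    assert (Hy : K * K * (h^2 * GG v) < eps * eps).
    { assert (K * K * (h^2 * GG v) <= K * K * h^2 * (4 / tau) * (/ INR (S n) + / INR (S p))).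
      { replace (K * K * h^2 * (4 / tau) * (/ INR (S n) + / INR (S p)))
          with (K * K * h^2 * (4 / tau * (/ INR (S n) + / INR (S p)))) by ring.
        replace (K * K * (h ^ 2 * GG v)) with (K * K * h^2 * GG v) by ring.
        apply Rmult_le_compat_l; auto. pose proof (pow2_ge_0 h). nra. }
      assert (K * K * h^2 * (4 / tau) * (/ INR (S n) + / INR (S p)) <= C / 2 * (2 * (eps * eps / (C + 1)))).
      { replace (C / 2) with (K * K * h^2 * (4 / tau)) by (unfold C; field; lra).
        apply Rmult_le_compat_l; [|lra].
        assert (0 <= 4 / tau) by (left; apply Rdiv_lt_0_compat; lra).
        pose proof (pow2_ge_0 h). apply Rmult_le_pos; auto. nra. }
      assert (C / 2 * (2 * (eps * eps / (C + 1))) < eps * eps).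
      { replace (C / 2 * (2 * (eps * eps / (C + 1)))) with (eps * eps * (C / (C + 1))) by (field; lra).
        assert (C / (C + 1) < 1). { apply (Rmult_lt_reg_r (C + 1)); [lra|]. field_simplify; lra. }
        assert (0 < eps * eps) by nra. rewrite <- (Rmult_1_r (eps*eps)) at 2. apply Rmult_lt_compat_l; auto. }
      lra. }
    assert (Hz : sqrt (K * K * (h ^ 2 * GG v)) < eps).
    { rewrite <- (sqrt_square eps) by lra. apply sqrt_lt_1_alt. split; auto. nra. }
    lra. }
  set (W := fun i j k => proj1_sig (Rcomplete.R_complete _ (Hcau i j k))).
  assert (HW : ptlim ws W).
  { intros i j k. unfold W. destruct (Rcomplete.R_complete _ (Hcau i j k)) as [l Hl]. simpl.
    apply is_lim_seq_Reals. auto. }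
  assert (HWp : periodic N W).
  { intros i j k. repeat split.
    - apply (lim_uniq _ _ _ _ (HW _ _ _) (HW i j k)). intros n.
      destruct (Hws n) as [[P _] _]. apply P.
    - apply (lim_uniq _ _ _ _ (HW _ _ _) (HW i j k)). intros n.
      destruct (Hws n) as [[P _] _]. apply P.
    - apply (lim_uniq _ _ _ _ (HW _ _ _) (HW i j k)). intros n.
      destruct (Hws n) as [[P _] _]. apply P. }
  assert (HWf : FF W).
  { split; auto. intros i j k.
    pose proof (uof_lim h tau un ws W HW i j k) as HU.
    split.
    - pose proof (is_lim_seq_le (fun _ => -1) (fun n => uof h tau un (ws n) i j k) (-1) (uof h tau un W i j k)) as L.
      simpl in L. apply L; auto. intros n. destruct (Hws n) as [[_ P] _]. apply P. apply is_lim_seq_const.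
    - pose proof (is_lim_seq_le (fun n => uof h tau un (ws n) i j k) (fun _ => 1) (uof h tau un W i j k) 1) as L.
      simpl in L. apply L; auto. intros n. destruct (Hws n) as [[_ P] _]. apply P. apply is_lim_seq_const. }
  exists W. split; auto.
  intros v Hv.
  pose proof (J_lim N h e2 th tau un ws W HW) as HJ.
  assert (HR : is_lim_seq (fun n => JJ v + / INR (S n)) (JJ v)).
  { assert (A : is_lim_seq (fun n => JJ v + / INR (S n)) (JJ v + 0)).
    { apply is_lim_seq_plus'. apply is_lim_seq_const. apply inv_lim. }
    rewrite Rplus_0_r in A. exact A. }
  assert (Hle : forall n, JJ (ws n) <= JJ v + / INR (S n)).
  { intros n. destruct (Hws n) as [_ [A _]]. pose proof (Hm v Hv). lra. }
  pose proof (is_lim_seq_le _ _ _ _ Hle HJ HR) as L.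
  simpl in L. auto.
Qed.

End Min2.

Lemma key_bound : forall a t, 0 < a <= 2 -> 0 < t <= 1 ->
  phi (t * a) + phi (2 - t * a) <= phi 2 + t * (a * ln (t * a)) + t * (phi (2 - a) - phi 2).
Proof.
  intros a t Ha Ht.
  pose proof (phi_convex 2 (2 - a) t ltac:(lra) ltac:(lra) ltac:(lra)).
  replace ((1 - t) * 2 + t * (2 - a)) with (2 - t * a) in H by ring.
  unfold phi at 1. lra.
Qed.

Lemma Sg_le_single : forall N f g i0 j0 k0 d,
  (forall i j k, inb N i -> inb N j -> inb N k -> f i j k <= g i j k) ->
  inb N i0 -> inb N j0 -> inb N k0 -> f i0 j0 k0 <= g i0 j0 k0 + d ->
  Sg N f <= Sg N g + d.
Proof.
  intros N f g i0 j0 k0 d H Hi Hj Hk H0.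
  pose proof (Sg_single N (fun i j k => g i j k - f i j k) i0 j0 k0
     ltac:(intros; cbv beta; pose proof (H i j k H1 H2 H3); lra) Hi Hj Hk).
  rewrite Sg_minus in H1. cbv beta in H1. lra.
Qed.

Section Int.
Variable N : nat.
Variable h e2 th tau : R.
Variable un : grid.
Hypothesis HN : (0 < N)%nat.
Hypothesis Hh : h <> 0.
Hypothesis He2 : 0 <= e2.
Hypothesis Htau : 0 < tau.
Hypothesis Hth : 0 < th.
Hypothesis Hun : forall i j k, -1 < un i j k < 1.
Hypothesis Hunp : periodic N un.

Local Notation JJ := (J N h e2 th tau un).
Local Notation FF := (feas N h tau un).
Local Notation UU := (uof h tau un).
Local Notation PP := (Pe N h tau un).
Local Notation RR := (Rr N h e2 th tau un).

Definition zg : grid := fun _ _ _ => 0.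

Lemma uof_zero : forall i j k, UU zg i j k = un i j k.
Proof. intros. unfold uof, lap_h, zg. ring. Qed.

Lemma interior : forall W, FF W -> (forall v, FF v -> JJ W <= JJ v) ->
  forall i j k, -1 < UU W i j k < 1.
Proof.
  intros W HW Hmin.
  assert (Hbox : forall i0 j0 k0, inb N i0 -> inb N j0 -> inb N k0 -> -1 < UU W i0 j0 k0 < 1).
  { intros i0 j0 k0 Hi0 Hj0 Hk0.
    apply NNPP. intro Hn.
    set (s := UU W i0 j0 k0).
    set (u0 := un i0 j0 k0).
    assert (Hs : -1 <= s <= 1) by (apply HW).
    pose proof (Hun i0 j0 k0) as Hu0. fold u0 in Hu0.
    assert (Hcase : (s = -1 /\ (1 - s) = 2) \/ (s = 1 /\ 1 + s = 2)).
    { destruct (Req_dec s (-1)); [left; lra|]. destruct (Req_dec s 1); [right; lra|].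
      exfalso; apply Hn. fold s. lra. }
    set (a := if Rle_dec s 0 then 1 + u0 else 1 - u0).
    assert (Ha : 0 < a <= 2).
    { unfold a. destruct (Rle_dec s 0); lra. }
    assert (Hsa : forall t, (1 - t) * s + t * u0 = if Rle_dec s 0 then -1 + t * a else 1 - t * a).
    { intros t. unfold a. destruct (Rle_dec s 0); destruct Hcase as [[E _]|[E _]]; rewrite E in *; try lra; ring. }
    set (c1 := phi (2 - a) - phi 2 - Phi u0 + Phi s).
    assert (Main : forall t, 0 < t <= 1 -> 0 <= JJ zg - JJ W + c1 + a * ln (t * a)).
    { intros t Ht.
      set (wt := comb t W zg).
      assert (Fz : FF zg).
      { apply (feas0 N h tau un Hun). }
      assert (Fwt : FF wt) by (apply feas_comb; auto; lra).
      pose proof (Hmin wt Fwt) as M1.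
      pose proof (Rr_convex N h e2 th tau un Hh He2 t W zg ltac:(lra)) as R1.
      pose proof (Gr_nonneg N h Hh (gsub W zg)) as G0.
      assert (R2 : RR wt <= (1 - t) * RR W + t * RR zg).
      { fold wt in R1. assert (0 <= t * (1 - t) * (tau / 2) * Gr N h (gsub W zg)).
        { apply Rmult_le_pos; auto. apply Rmult_le_pos; [nra|lra]. }
        lra. }
      assert (P2 : PP wt <= (1 - t) * PP W + t * PP zg + t * (a * ln (t * a) + c1)).
      { unfold Pe. rewrite <- !Sg_scal, <- Sg_plus.
        apply (Sg_le_single N _ _ i0 j0 k0); auto.
        - intros i j k _ _ _. cbv beta. unfold wt. rewrite uof_comb. unfold comb. apply Phi_convex; auto.
          apply HW. apply Fz. lra.
        - cbv beta. unfold wt. rewrite uof_comb. unfold comb. fold s. rewrite uof_zero. fold u0.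
          rewrite Hsa. pose proof (key_bound a t Ha Ht) as KB.
          unfold c1. unfold Phi.
          destruct (Rle_dec s 0); destruct Hcase as [[E E']|[E E']]; try lra;
          rewrite E; rewrite E in E';
          [replace (1 + (-1 + t * a)) with (t * a) by ring;
           replace (1 - (-1 + t * a)) with (2 - t * a) by ring;
           replace (1 + -1) with 0 by ring; replace (1 - -1) with 2 by ring
          |replace (1 + (1 - t * a)) with (2 - t * a) by ring;
           replace (1 - (1 - t * a)) with (t * a) by ring;
           replace (1 + 1) with 2 by ring; replace (1 - 1) with 0 by ring];
          rewrite phi0; lra. }
      unfold J in M1. unfold J.
      assert (t * (JJ W) <= t * (JJ zg + a * ln (t * a) + c1)).
      { unfold J. lra. }
      apply Rmult_le_reg_l in H; [|lra]. unfold J in H. lra. }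
    set (K := Rabs (JJ zg - JJ W + c1) + 1).
    set (t := Rmin 1 (exp (- K / a) / a)).
    assert (Ht : 0 < t <= 1).
    { unfold t. split. apply Rmin_pos. lra. apply Rdiv_lt_0_compat; [apply exp_pos|lra]. apply Rmin_l. }
    assert (Hta : t * a <= exp (- K / a)).
    { assert (t <= exp (- K / a) / a) by (unfold t; apply Rmin_r).
      assert (t * a <= exp (- K / a) / a * a) by (apply Rmult_le_compat_r; lra).
      assert (exp (- K / a) / a * a = exp (- K / a)) by (field; lra). lra. }
    assert (Hln : ln (t * a) <= - K / a).
    { rewrite <- (ln_exp (- K / a)). apply ln_le; auto. apply Rmult_lt_0_compat; lra. }
    assert (a * ln (t * a) <= - K).
    { replace (- K) with (a * (- K / a)) by (field; lra). apply Rmult_le_compat_l; lra. }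
    pose proof (Main t Ht).
    pose proof (Rle_abs (JJ zg - JJ W + c1)). unfold K in *. lra. }
  intros i j k.
  rewrite (per_red N HN (UU W) (uof_per N h tau un Hunp W (proj1 HW))).
  apply Hbox; apply inb_mod; auto.
Qed.

End Int.

Lemma deriv_min0 : forall f D r, derivable_pt_lim f 0 D -> 0 < r ->
  (forall t, Rabs t < r -> f 0 <= f t) -> D = 0.
Proof.
  intros f D r Hd Hr Hm. apply NNPP. intro HD.
  assert (Hpos : 0 < Rabs D / 2) by (pose proof (Rabs_pos_lt D HD); lra).
  destruct (Hd _ Hpos) as [del Hdel].
  set (m := Rmin del r / 2).
  assert (Hm0 : 0 < m) by (unfold m; pose proof (cond_pos del); pose proof (Rmin_pos del r (cond_pos del) Hr); lra).
  assert (Hm1 : m < del) by (unfold m; pose proof (Rmin_l del r); pose proof (cond_pos del); lra).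
  assert (Hm2 : m < r) by (unfold m; pose proof (Rmin_r del r); lra).
  destruct (Rlt_dec 0 D) as [Dp|Dn].
  - set (t := - m).
    assert (Ht : t <> 0) by (unfold t; lra).
    assert (Hta : Rabs t < del) by (unfold t; rewrite Rabs_Ropp, Rabs_right; lra).
    pose proof (Hdel t Ht Hta) as H. rewrite Rplus_0_l in H.
    pose proof (Hm t ltac:(unfold t; rewrite Rabs_Ropp, Rabs_right; lra)).
    rewrite (Rabs_right D) in H by lra.
    apply Rabs_def2 in H. destruct H as [H1 H2].
    assert ((f t - f 0) / t >= 0 \/ (f t - f 0)/t < 0) by lra.
    assert ((f t - f 0) / t <= 0).
    { unfold Rdiv. replace ((f t - f 0) * / t) with ((f t - f 0) * / m * -1) by (unfold t; field; lra).
      assert (0 <= (f t - f 0) * / m) by (apply Rmult_le_pos; [lra| left; apply Rinv_0_lt_compat; lra]).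
      lra. }
    lra.
  - assert (Dn' : D < 0) by (destruct (Rtotal_order D 0) as [|[|]]; lra).
    set (t := m).
    assert (Ht : t <> 0) by (unfold t; lra).
    assert (Hta : Rabs t < del) by (unfold t; rewrite Rabs_right; lra).
    pose proof (Hdel t Ht Hta) as H. rewrite Rplus_0_l in H.
    pose proof (Hm t ltac:(unfold t; rewrite Rabs_right; lra)).
    rewrite (Rabs_left D) in H by lra.
    apply Rabs_def2 in H. destruct H as [H1 H2].
    assert ((f t - f 0) / t >= 0).
    { unfold Rdiv. apply Rle_ge. apply Rmult_le_pos; [lra| left; apply Rinv_0_lt_compat; unfold t; lra]. }
    lra.
Qed.

Lemma Gr_lin : forall N h (p r : grid) t,
  Gr N h (fun i j k => p i j k + t * r i j k) = Gr N h p + 2 * t * Br N h p r + t ^ 2 * Gr N h r.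
Proof.
  intros. unfold Gr, Br.
  set (T := fun (a b : grid) i j k =>
     (a (i+1)%Z j k - a i j k) * (b (i+1)%Z j k - b i j k) +
     (a i (j+1)%Z k - a i j k) * (b i (j+1)%Z k - b i j k) +
     (a i j (k+1)%Z - a i j k) * (b i j (k+1)%Z - b i j k)).
  change (/ h ^ 2 * Sg N (T (fun i j k => p i j k + t * r i j k) (fun i j k => p i j k + t * r i j k)) =
     / h ^ 2 * Sg N (T p p) + 2 * t * (/ h ^ 2 * Sg N (T p r)) + t ^ 2 * (/ h ^ 2 * Sg N (T r r))).
  rewrite (Sg_ext N _ (fun i j k => T p p i j k + (2 * t) * T p r i j k + t^2 * T r r i j k)).
  - rewrite !Sg_plus, !Sg_scal. ring.
  - intros. unfold T. ring.
Qed.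

Section FOC.
Variable N : nat.
Variable h e2 th tau : R.
Variable un : grid.
Hypothesis HN : (0 < N)%nat.
Hypothesis Hh : h <> 0.
Hypothesis He2 : 0 <= e2.
Hypothesis Htau : 0 < tau.
Hypothesis Hth : 0 < th.
Hypothesis Hun : forall i j k, -1 < un i j k < 1.
Hypothesis Hunp : periodic N un.

Local Notation JJ := (J N h e2 th tau un).
Local Notation FF := (feas N h tau un).
Local Notation UU := (uof h tau un).

Lemma foc : forall W, FF W -> (forall v, FF v -> JJ W <= JJ v) ->
  forall x1 x2 x3, inb N x1 -> inb N x2 -> inb N x3 ->
  lap_h h (fun i j k => Fl (UU W i j k) - e2 * lap_h h (UU W) i j k - th * un i j k) x1 x2 x3
  = lap_h h W x1 x2 x3.
Proof.
  intros W HW Hmin x1 x2 x3 H1 H2 H3.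
  assert (Hint : forall i j k, -1 < UU W i j k < 1) by (eapply interior; eauto).
  set (u := UU W).
  assert (Hup : periodic N u) by (apply uof_per; auto; apply HW).
  set (g := fun i j k => Fl (u i j k) - e2 * lap_h h u i j k - th * un i j k).
  assert (Hgp : periodic N g).
  { unfold g. apply (per_map2 N (fun i j k => Fl (u i j k) - e2 * lap_h h u i j k) un (fun x y => x - th * y)); auto.
    apply (per_map2 N (fun i j k => Fl (u i j k)) (lap_h h u) (fun x y => x - e2 * y)); auto.
    apply (per_map1 N u Fl); auto. apply per_lap; auto. }
  set (d := dl N x1 x2 x3).
  assert (Hdp : periodic N d) by apply per_dl.
  set (q := fun i j k => tau * lap_h h d i j k).
  assert (Hqp : periodic N q) by (apply (per_map1 N (lap_h h d) (fun x => tau * x)); apply per_lap; auto).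
  assert (Hmarg : exists c, 0 < c /\ forall i j k, -1 + c <= u i j k <= 1 - c).
  { destruct (Sg_minpos N (fun i j k => Rmin (1 - u i j k) (1 + u i j k))) as [c [Hc Hc']].
    { intros. apply Rmin_pos; pose proof (Hint i j k) as Hq; fold u in Hq; lra. }
    exists c. split; auto. intros i j k.
    rewrite (per_red N HN u Hup).
    pose proof (Hc' _ _ _ (inb_mod N HN i) (inb_mod N HN j) (inb_mod N HN k)) as Z. cbv beta in Z.
    pose proof (Rmin_l (1 - u (i mod Z.of_nat N)%Z (j mod Z.of_nat N)%Z (k mod Z.of_nat N)%Z)
                       (1 + u (i mod Z.of_nat N)%Z (j mod Z.of_nat N)%Z (k mod Z.of_nat N)%Z)).
    pose proof (Rmin_r (1 - u (i mod Z.of_nat N)%Z (j mod Z.of_nat N)%Z (k mod Z.of_nat N)%Z)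
                       (1 + u (i mod Z.of_nat N)%Z (j mod Z.of_nat N)%Z (k mod Z.of_nat N)%Z)).
    lra. }
  destruct Hmarg as [c [Hc Hcu]].
  assert (Hh2 : 0 < h ^ 2) by (apply h2pos; auto).
  set (B := tau * (6 / h ^ 2)).
  assert (HB : 0 < B) by (unfold B; apply Rmult_lt_0_compat; auto; apply Rdiv_lt_0_compat; lra).
  assert (Hqb : forall i j k, Rabs (q i j k) <= B).
  { intros. unfold q, B, lap_h.
    assert (Hd01 : forall i j k, 0 <= d i j k <= 1) by (intros; apply dl_range).
    pose proof (Hd01 (i+1)%Z j k). pose proof (Hd01 (i-1)%Z j k).
    pose proof (Hd01 i (j+1)%Z k). pose proof (Hd01 i (j-1)%Z k).
    pose proof (Hd01 i j (k+1)%Z). pose proof (Hd01 i j (k-1)%Z).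
    pose proof (Hd01 i j k).
    set (S0 := d (i + 1)%Z j k + d (i - 1)%Z j k + d i (j + 1)%Z k + d i (j - 1)%Z k +
     d i j (k + 1)%Z + d i j (k - 1)%Z - 6 * d i j k).
    assert (-6 <= S0 <= 6) by (unfold S0; lra).
    set (kk := tau * / h ^ 2).
    assert (0 < kk) by (unfold kk; apply Rmult_lt_0_compat; auto; apply Rinv_0_lt_compat; auto).
    replace (tau * (/ h ^ 2 * S0)) with (kk * S0) by (unfold kk; ring).
    replace (tau * (6 / h ^ 2)) with (kk * 6) by (unfold kk; field; lra).
    apply Rabs_le. split; nra. }
  set (wt := fun t => fun i j k => W i j k + t * d i j k).
  assert (Huw : forall t i j k, UU (wt t) i j k = u i j k + t * q i j k).
  { intros. unfold u, uof, wt, q, lap_h. ring. }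
  set (f := fun t => JJ (wt t)).
  set (r := c / (B + 1)).
  assert (Hr : 0 < r) by (unfold r; apply Rdiv_lt_0_compat; lra).
  assert (Hloc : forall t, Rabs t < r -> f 0 <= f t).
  { intros t Ht. unfold f.
    assert (E0 : wt 0 = W).
    { unfold wt. do 3 (apply functional_extensionality; intro). ring. }
    rewrite E0. apply Hmin. split.
    - unfold wt. apply (per_map2 N W d (fun x y => x + t * y)); auto. apply HW.
    - intros i j k. rewrite Huw. pose proof (Hcu i j k). pose proof (Hqb i j k).
      assert (Rabs (t * q i j k) < c).
      { rewrite Rabs_mult. assert (Rabs t * Rabs (q i j k) <= Rabs t * B) by (apply Rmult_le_compat_l; auto; apply Rabs_pos).
        assert (Rabs t * B < c).
        { assert (Rabs t * (B + 1) < c).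
          { unfold r in Ht. apply (Rmult_lt_compat_r (B + 1)) in Ht; [|lra].
            replace (c / (B + 1) * (B + 1)) with c in Ht by (field; lra). lra. }
          pose proof (Rabs_pos t). nra. }
        lra. }
      apply Rabs_def2 in H4. lra. }
  set (A1 := e2 / 2 * (2 * Br N h u q) - th * Sg N (fun i j k => un i j k * q i j k) + tau / 2 * (2 * Br N h W d)).
  set (A0 := e2 / 2 * Gr N h u - th * Sg N (fun i j k => un i j k * u i j k) + tau / 2 * Gr N h W).
  set (A2 := e2 / 2 * Gr N h q + tau / 2 * Gr N h d).
  assert (Ef : f = fun t => Sg N (fun i j k => Phi (u i j k + t * q i j k)) + (A0 + t * A1 + t ^ 2 * A2)).
  { apply functional_extensionality; intro t. unfold f, J, Pe, Rr.
    assert (E : UU (wt t) = fun i j k => u i j k + t * q i j k).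
    { do 3 (apply functional_extensionality; intro). apply Huw. }
    rewrite E. unfold wt. rewrite !Gr_lin.
    rewrite (Sg_ext N (fun i j k => un i j k * (u i j k + t * q i j k))
               (fun i j k => un i j k * u i j k + t * (un i j k * q i j k))) by (intros; ring).
    rewrite Sg_plus, Sg_scal. unfold A0, A1, A2. ring. }
  assert (Hder : derivable_pt_lim f 0 (Sg N (fun i j k => Fl (u i j k) * q i j k) + A1)).
  { rewrite Ef. apply (derivable_pt_lim_plus (fun t => Sg N (fun i j k => Phi (u i j k + t * q i j k)))
                        (fun t => A0 + t * A1 + t ^ 2 * A2)).
    - apply (Sg_deriv N (fun i j k t => Phi (u i j k + t * q i j k))). intros. apply Phi_deriv. apply Hint.
    - apply is_derive_Reals. auto_derive; auto. ring. }
  pose proof (deriv_min0 f _ r Hder Hr Hloc) as HD.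
  assert (E1 : Br N h u q = - Sg N (fun i j k => q i j k * lap_h h u i j k)).
  { rewrite Br_sym. apply Br_lap; auto. }
  assert (E2 : Br N h W d = - Sg N (fun i j k => lap_h h W i j k * d i j k)).
  { rewrite Br_sym. rewrite Br_lap; auto. f_equal. apply Sg_ext; intros; ring. apply HW. }
  assert (E3 : Sg N (fun i j k => Fl (u i j k) * q i j k) - e2 * Sg N (fun i j k => q i j k * lap_h h u i j k)
               - th * Sg N (fun i j k => un i j k * q i j k) = tau * Sg N (fun i j k => g i j k * lap_h h d i j k)).
  { rewrite <- !Sg_scal, <- !Sg_minus. apply Sg_ext. intros. unfold g, q. ring. }
  rewrite (lap_sym N h Hh g d Hgp Hdp) in E3.
  assert (E4 : Sg N (fun i j k => lap_h h g i j k * d i j k) = lap_h h g x1 x2 x3).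
  { apply Sg_delta; auto. }
  assert (E5 : Sg N (fun i j k => lap_h h W i j k * d i j k) = lap_h h W x1 x2 x3).
  { apply Sg_delta; auto. }
  unfold A1 in HD. rewrite E1, E2, E5 in HD.
  assert (tau * (lap_h h g x1 x2 x3 - lap_h h W x1 x2 x3) = 0).
  { rewrite <- E4. lra. }
  apply Rmult_integral in H. destruct H; [lra|]. fold u. fold g. lra.
Qed.

End FOC.

Theorem mainTheorem1 (L : R) (N : nat) (eps theta0 tau alpha : R) (un : grid) :
  0 < L -> (0 < N)%nat ->
  0 < eps -> 0 < theta0 -> 0 < tau -> 0 < alpha < 1 ->
  periodic N un -> (forall i j k : Z, -1 < un i j k < 1) ->
  let h := L / INR N in
  exists u1 w1 u2 w2 u3 w3 : grid,
    periodic N u1 /\ periodic N w1 /\ periodic N u2 /\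
    periodic N w2 /\ periodic N u3 /\ periodic N w3 /\
    (forall i j k : Z, -1 < u2 i j k < 1) /\
    (forall i j k : Z,
       - eps ^ 2 * lap_h h u1 i j k - alpha * w1 i j k + u3 i j k = 0 /\
       alpha * (- u1 i j k + un i j k) + tau * lap_h h w1 i j k - w3 i j k = 0 /\
       ln (1 + u2 i j k) - ln (1 - u2 i j k) - theta0 * un i j k
         - (1 - alpha) * w2 i j k - u3 i j k = 0 /\
       (1 - alpha) * (- u2 i j k + un i j k) + w3 i j k = 0 /\
       u1 i j k - u2 i j k = 0 /\
       w1 i j k - w2 i j k = 0).
Proof.
  intros HL HN Heps Hth Htau Hal Hunp Hun h.
  assert (Hh : h <> 0).
  { unfold h. assert (0 < INR N) by (apply lt_0_INR; auto).
    assert (0 < L / INR N) by (apply Rdiv_lt_0_compat; auto). lra. }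
  assert (He2 : 0 <= eps ^ 2) by (apply pow2_ge_0).
  destruct (min_exists N h (eps ^ 2) theta0 tau un HN Hh He2 Htau Hth Hun) as [W [HW Hmin]].
  assert (Hint : forall i j k, -1 < uof h tau un W i j k < 1) by (eapply interior; eauto).
  set (u := uof h tau un W).
  assert (Hup : periodic N u) by (apply uof_per; auto; apply HW).
  set (g := fun i j k => Fl (u i j k) - eps ^ 2 * lap_h h u i j k - theta0 * un i j k).
  assert (Hgp : periodic N g).
  { unfold g. apply (per_map2 N (fun i j k => Fl (u i j k) - eps ^ 2 * lap_h h u i j k) un (fun x y => x - theta0 * y)); auto.
    apply (per_map2 N (fun i j k => Fl (u i j k)) (lap_h h u) (fun x y => x - eps ^ 2 * y)); auto.
    apply (per_map1 N u Fl); auto. apply per_lap; auto. }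
  assert (Hlap : forall i j k, lap_h h g i j k = lap_h h W i j k).
  { intros i j k.
    rewrite (per_red N HN (lap_h h g) (per_lap N h g Hgp)).
    rewrite (per_red N HN (lap_h h W) (per_lap N h W (proj1 HW))).
    eapply foc; eauto; apply inb_mod; auto. }
  set (u3 := fun i j k => eps ^ 2 * lap_h h u i j k + alpha * g i j k).
  set (w3 := fun i j k => (1 - alpha) * (u i j k - un i j k)).
  exists u, g, u, g, u3, w3.
  split; [exact Hup|]. split; [exact Hgp|]. split; [exact Hup|]. split; [exact Hgp|].
  split.
  { unfold u3. apply (per_map2 N (lap_h h u) g (fun x y => eps ^ 2 * x + alpha * y)); auto. apply per_lap; auto. }
  split.
  { unfold w3. apply (per_map2 N u un (fun x y => (1 - alpha) * (x - y))); auto. }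
  split; [exact Hint|].
  intros i j k.
  split; [unfold u3; ring|].
  split; [rewrite Hlap; unfold w3, u, uof; ring|].
  split; [unfold u3, g, Fl; ring|].
  split; [unfold w3; ring|].
  split; ring.
Qed.
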